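(* The function $\mathcal{R}(t,D_1,D_2)$ is jointly multiplicative in $t,D_1,D_2$: for all integers $t$ and positive integers $C_1,C_2,E_1,E_2$ with $\gcd(C_1C_2,E_1E_2)=1$, \[ \mathcal{R}(t,C_1E_1,C_2E_2)=\mathcal{R}(t,C_1,C_2)\,\mathcal{R}(t,E_1,E_2). \]
   Context: Notation: $e(x)=e^{2\pi ix}$. For integers $m_1,m_2,n_1,n_2$ and positive integers $D_1,D_2$, the $GL_3$ Kloosterman sum is \[ S(m_1,m_2,n_1,n_2;D_1,D_2)=\sum e\Big(\frac{m_1B_1+n_1(Y_1D_2-Z_1B_2)}{D_1}\Big)e\Big(\frac{m_2B_2+n_2(Y_2D_1-Z_2B_1)}{D_2}\Big), \] the sum over $B_1,C_1 \bmod D_1$, $B_2,C_2\bmod D_2$ with $\gcd(B_1,C_1,D_1)=\gcd(B_2,C_2,D_2)=1$ and $D_1C_2+B_1B_2+C_1D_2\equiv 0\pmod{D_1D_2}$, where $Y_1B_1+Z_1C_1\equiv 1\pmod{D_1}$, $Y_2B_2+Z_2C_2\equiv1\pmod{D_2}$ (independent of choices). For integers $a,b$ with $(a,D_1)=(b,D_2)=1$ and integers $u,t$, define \[ \widehat S(a,u,t,b;D_1,D_2)=\frac{1}{D_1D_2}\sum_{x\bmod D_1}\sum_{y\bmod D_2}S(a,y,x,b;D_1,D_2)\,e\Big(\frac{-xt}{D_1}\Big)e\Big(\frac{-yu}{D_2}\Big), \] and \[ \mathcal{R}(t,D_1,D_2)=\max_{(ab,D_1)=1}\ \sum_{u\bmod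 D_2}\big|\widehat S(a,u,bt,1;D_1,D_2)\big|, \] the maximum over integers $a,b$ coprime to $D_1$. *)

(* Defs.v *)
From HB Require Import structures.
From mathcomp Require Import all_boot all_order all_algebra.
From mathcomp Require Import reals trigo.
From mathcomp.real_closed Require Import complex.
Set Implicit Arguments. Unset Strict Implicit. Unset Printing Implicit Defensive.
Import Order.TTheory GRing.Theory Num.Theory.
Local Open Scope ring_scope.
Local Open Scope complex_scope.

Section Defs.
Variable R : realType.

Definition ee (x : R) : R[i] := (cos (2 * pi * x)) +i* (sin (2 * pi * x)).

Definition eD (k : int) (D : nat) : R[i] := ee (k%:~R / D%:R).

(* A choice of (Y, Z) with Y*B + Z*C = 1 (mod D), when gcd(B,C,D) = 1 *)
Definition bez (D B C : nat) : int * int :=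
  match [pick p : 'I_D * 'I_D | (p.1 * B + p.2 * C) %% D == 1 %% D]%N with
  | Some p => ((p.1 : nat)%:Z, (p.2 : nat)%:Z)
  | None => (0, 0)
  end.

Definition KlS (m1 m2 n1 n2 : int) (D1 D2 : nat) : R[i] :=
  \sum_(B1 < D1) \sum_(C1 < D1) \sum_(B2 < D2) \sum_(C2 < D2)
    if [&& gcdn (gcdn B1 C1) D1 == 1%N, gcdn (gcdn B2 C2) D2 == 1%N
         & (D1 * D2 %| D1 * C2 + B1 * B2 + C1 * D2)%N]
    then
      let YZ1 := bez D1 B1 C1 in
      let YZ2 := bez D2 B2 C2 in
      eD (m1 * (B1 : nat)%:Z
          + n1 * (YZ1.1 * (D2 : nat)%:Z - YZ1.2 * (B2 : nat)%:Z)) D1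
      * eD (m2 * (B2 : nat)%:Z
          + n2 * (YZ2.1 * (D1 : nat)%:Z - YZ2.2 * (B1 : nat)%:Z)) D2
    else 0.

Definition Shat (a u t b : int) (D1 D2 : nat) : R[i] :=
  (D1 * D2)%:R^-1 *
  \sum_(x < D1) \sum_(y < D2)
     KlS a (y : nat)%:Z (x : nat)%:Z b D1 D2
     * eD (- ((x : nat)%:Z * t)) D1 * eD (- ((y : nat)%:Z * u)) D2.

Definition cabs (z : R[i]) : R := complex.Re `|z|.

Definition Rcal (t : int) (D1 D2 : nat) : R :=
  \big[Num.max/0]_(a < D1 | coprime a D1)
   \big[Num.max/0]_(b < D1 | coprime b D1)
     \sum_(u < D2) cabs (Shat (a : nat)%:Z (u : nat)%:Z ((b : nat)%:Z * t) 1 D1 D2).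

End Defs.

(* Main.v *)
Require Import Defs.
From HB Require Import structures.
From mathcomp Require Import all_boot all_order all_algebra.
From mathcomp Require Import reals trigo.
From mathcomp.real_closed Require Import complex.
From mathcomp Require Import ring lra zify.
Set Implicit Arguments. Unset Strict Implicit. Unset Printing Implicit Defensive.
Import Order.TTheory GRing.Theory Num.Theory.
Local Open Scope ring_scope.

Definition cmp (l s c x : nat) := ((l * x + s) %% c)%N.

Lemma mod_cancel (c l s x y : nat) : coprime l c ->
  cmp l s c x = cmp l s c y -> (c%:Z %| x%:Z - y%:Z)%Z.
Proof.
move=> cl h.
have : ((l * x + s)%N%:Z == (l * y + s)%N%:Z %[mod c%:Z])%Z by rewrite !modz_nat; move: h; rewrite /cmp => ->.
rewrite eqz_mod_dvd !PoszD !PoszM (_ : l%:Z * x%:Z + s%:Z - (l%:Z * y%:Z + s%:Z) = l%:Z * (x%:Z - y%:Z)); last by ring.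
rewrite Gauss_dvdzr //.
by rewrite coprimez_sym coprimezE.
Qed.

Lemma crt_inj (c e l m s s' x y : nat) : coprime c e -> coprime l c -> coprime m e ->
  (x < c * e)%N -> (y < c * e)%N ->
  cmp l s c x = cmp l s c y -> cmp m s' e x = cmp m s' e y -> x = y.
Proof.
move=> ce lc me xl yl h1 h2.
have d1 := mod_cancel lc h1; have d2 := mod_cancel me h2.
have : (x%:Z == y%:Z %[mod (c * e)%N%:Z])%Z.
  by rewrite PoszM zchinese_remainder ?coprimezE // !eqz_mod_dvd d1 d2.
by rewrite !modz_nat !modn_small // => /eqP [].
Qed.

Lemma cmp_lt (l s c x : nat) : (0 < c)%N -> (cmp l s c x < c)%N.
Proof. by move=> c0; rewrite /cmp ltn_pmod. Qed.

Lemma crt_bij (c e l m s s' : nat) (c0 : (0 < c)%N) (e0 : (0 < e)%N) :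
  coprime c e -> coprime l c -> coprime m e ->
  bijective (fun x : 'I_(c * e) => (Ordinal (@cmp_lt l s c x c0), Ordinal (@cmp_lt m s' e x e0))).
Proof.
move=> ce lc me.
apply: inj_card_bij; last by rewrite card_prod !card_ord.
move=> x y [h1 h2]; apply: val_inj; exact: (crt_inj ce lc me (ltn_ord x) (ltn_ord y) h1 h2).
Qed.

Lemma crt_sum (V : nmodType) (c e l m s s' : nat) (F : nat -> nat -> V) :
  (0 < c)%N -> (0 < e)%N -> coprime c e -> coprime l c -> coprime m e ->
  \sum_(x < c * e) F (cmp l s c x) (cmp m s' e x) = \sum_(i < c) \sum_(j < e) F i j.
Proof.
move=> c0 e0 ce lc me.
rewrite pair_bigA /= (reindex _ (onW_bij _ (crt_bij s s' c0 e0 ce lc me))) /=.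
by [].
Qed.

Lemma crt_sum2 (V : comPzRingType) (c e l m s s' : nat) (A B : nat -> V) :
  (0 < c)%N -> (0 < e)%N -> coprime c e -> coprime l c -> coprime m e ->
  \sum_(x < c * e) A (cmp l s c x) * B (cmp m s' e x) = (\sum_(i < c) A i) * (\sum_(j < e) B j).
Proof.
move=> c0 e0 ce lc me.
rewrite (@crt_sum _ c e l m s s' (fun i j => A i * B j)) // mulr_suml.
by apply: eq_bigr => i _; rewrite mulr_sumr.
Qed.

Lemma natmod1 (n D : nat) : ((n %% D) == (1 %% D))%N = (D%:Z %| n%:Z - 1)%Z.
Proof. by rewrite -eqz_mod_dvd !modz_nat eqz_nat. Qed.

Lemma primP (D B C : nat) :
  reflect (exists Y Z : int, (D%:Z %| Y * B%:Z + Z * C%:Z - 1)%Z) (gcdn (gcdn B C) D == 1)%N.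
Proof.
apply: (iffP idP).
  move=> h.
  have [u [v huv]] := Bezoutz B%:Z C%:Z.
  have [s [w hsw]] := Bezoutz (gcdz B%:Z C%:Z) D%:Z.
  have g1 : gcdz (gcdz B%:Z C%:Z) D%:Z = 1 by rewrite /gcdz /= (eqP h).
  exists (s * u), (s * v).
  have -> : s * u * B%:Z + s * v * C%:Z - 1 = - w * D%:Z.
    by rewrite -g1 -hsw -huv; ring.
  by rewrite dvdz_mull.
move=> [Y [Z hd]].
set d := gcdn (gcdn B C) D.
have dB : (d%:Z %| B%:Z)%Z by rewrite dvdzE /= (dvdn_trans (dvdn_gcdl _ _)) // dvdn_gcdl.
have dC : (d%:Z %| C%:Z)%Z by rewrite dvdzE /= (dvdn_trans (dvdn_gcdl _ _)) // dvdn_gcdr.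
have dD : (d%:Z %| D%:Z)%Z by rewrite dvdzE /= dvdn_gcdr.
have : (d%:Z %| 1%R)%Z.
  have e : Y * B%:Z + Z * C%:Z - (Y * B%:Z + Z * C%:Z - 1) = 1 by ring.
  rewrite -e; apply: rpredB; last exact: (dvdz_trans dD).
  by rewrite rpredD ?dvdz_mull.
by rewrite dvdz1.
Qed.

Lemma bezP (D B C : nat) : (0 < D)%N -> (gcdn (gcdn B C) D == 1)%N ->
  (D%:Z %| (bez D B C).1 * B%:Z + (bez D B C).2 * C%:Z - 1)%Z.
Proof.
move=> D0 /primP [Y [Z hd]].
rewrite /bez; case: pickP => [p /= hp | none].
  by move: hp; rewrite natmod1 PoszD !PoszM.
have Dz : D%:Z != 0 by rewrite eqz_nat -lt0n.
pose y := `|(Y %% D%:Z)%Z|%N; pose z := `|(Z %% D%:Z)%Z|%N.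
have yE : y%:Z = (Y %% D%:Z)%Z by rewrite /y gez0_abs // modz_ge0.
have zE : z%:Z = (Z %% D%:Z)%Z by rewrite /z gez0_abs // modz_ge0.
have yl : (y < D)%N by rewrite -ltz_nat yE -[X in _ < X]gez0_abs // ltz_mod.
have zl : (z < D)%N by rewrite -ltz_nat zE -[X in _ < X]gez0_abs // ltz_mod.
move: (none (Ordinal yl, Ordinal zl)); rewrite /= natmod1 PoszD !PoszM yE zE.
have -> : (Y %% D%:Z)%Z * B%:Z + (Z %% D%:Z)%Z * C%:Z - 1
   = (Y * B%:Z + Z * C%:Z - 1) - ((Y %/ D%:Z)%Z * B%:Z + (Z %/ D%:Z)%Z * C%:Z) * D%:Z.
  move: (divz_eq Y D%:Z) (divz_eq Z D%:Z).
  set q1 := (Y %/ D%:Z)%Z; set r1 := (Y %% D%:Z)%Z.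
  set q2 := (Z %/ D%:Z)%Z; set r2 := (Z %% D%:Z)%Z.
  by move=> -> ->; ring.
by rewrite rpredB // dvdz_mull.
Qed.

Lemma charP (D B C B' D' Y Z r : int) :
  (D %| Y * B + Z * C - 1)%Z -> (D %| B * B' + C * D')%Z ->
  (D %| (Y * D' - Z * B') - r)%Z = (D %| r * B - D')%Z && (D %| r * C + B')%Z.
Proof.
move=> h1 h2.
set P := Y * D' - Z * B'.
have hPB : (D %| P * B - D')%Z.
  rewrite (_ : P * B - D' = D' * (Y * B + Z * C - 1) - Z * (B * B' + C * D')); last by rewrite /P; ring.
  by rewrite rpredB ?dvdz_mull.
have hPC : (D %| P * C + B')%Z.
  rewrite (_ : P * C + B' = Y * (B * B' + C * D') - B' * (Y * B + Z * C - 1)); last by rewrite /P; ring.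
  by rewrite rpredB ?dvdz_mull.
apply/idP/andP.
  move=> hw; split.
    rewrite (_ : r * B - D' = (P * B - D') - (P - r) * B); last by ring.
    by rewrite rpredB ?dvdz_mulr.
  rewrite (_ : r * C + B' = (P * C + B') - (P - r) * C); last by ring.
  by rewrite rpredB ?dvdz_mulr.
move=> [hB hC].
rewrite (_ : P - r = Y * ((P * B - D') - (r * B - D')) + Z * ((P * C + B') - (r * C + B')) - (P - r) * (Y * B + Z * C - 1)); last by ring.
apply: rpredB; last exact: dvdz_mull.
by apply: rpredD; apply: dvdz_mull; apply: rpredB.
Qed.

Lemma swap3 (V : nmodType) (m n p : nat) (F : 'I_m -> 'I_n -> 'I_p -> V) :
  \sum_(x < m) \sum_(y < n) \sum_(a < p) F x y a = \sum_(a < p) \sum_(x < m) \sum_(y < n) F x y a.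
Proof.
under eq_bigr do rewrite exchange_big.
by rewrite exchange_big.
Qed.

Lemma swap6 (V : nmodType) (m n p q r s : nat)
  (F : 'I_m -> 'I_n -> 'I_p -> 'I_q -> 'I_r -> 'I_s -> V) :
  \sum_(x < m) \sum_(y < n) \sum_(a < p) \sum_(b < q) \sum_(c < r) \sum_(d < s) F x y a b c d =
  \sum_(a < p) \sum_(b < q) \sum_(c < r) \sum_(d < s) \sum_(x < m) \sum_(y < n) F x y a b c d.
Proof.
rewrite (swap3 (fun x y a => \sum_(b < q) \sum_(c < r) \sum_(d < s) F x y a b c d)).
apply: eq_bigr => a _.
rewrite (swap3 (fun x y b => \sum_(c < r) \sum_(d < s) F x y a b c d)).
apply: eq_bigr => b _.
rewrite (swap3 (fun x y c => \sum_(d < s) F x y a b c d)).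
apply: eq_bigr => c _.
by rewrite (swap3 (fun x y d => F x y a b c d)).
Qed.


Lemma dvdz_comb2 (d x y : int) : (d %| x)%Z -> (d %| y)%Z -> forall u v : int, (d %| u * x + v * y)%Z.
Proof. by move=> hx hy u v; rewrite rpredD ?dvdz_mull. Qed.

Lemma coprimez_inv (d x y : int) : (d %| x * y - 1)%Z -> coprimez x d.
Proof.
move=> h; rewrite /coprimez; apply/eqP.
have g1 : (gcdz x d %| 1%R)%Z.
  have -> : (1 : int) = y * x - (x * y - 1) by ring.
  by rewrite rpredB ?dvdz_mull ?dvdz_gcdl // (dvdz_trans (dvdz_gcdr x d) h).
by move: g1; rewrite dvdz1 /gcdz /= => /eqP ->.
Qed.

Lemma prim_tr1 (d B C b g L R M N k Y Z : int) :
  (d %| L * R - 1)%Z -> (d %| M * N - 1)%Z -> (d %| b - M * B)%Z -> (d %| g - (L * C + k * b))%Z ->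
  (d %| Y * B + Z * C - 1)%Z -> (d %| (Y * N - Z * R * k) * b + (Z * R) * g - 1)%Z.
Proof.
move=> hLR hMN hb hg h.
rewrite (_ : (Y * N - Z * R * k) * b + (Z * R) * g - 1 =
  (Y * B + Z * C - 1) + (Y * N) * (b - M * B) + (Z * R) * (g - (L * C + k * b))
  + (Y * B) * (M * N - 1) + (Z * C) * (L * R - 1)); last by ring.
move: h; set X := Y * B + Z * C - 1 => h.
by clearbody X; repeat apply: rpredD; rewrite ?dvdz_mull.
Qed.

Lemma prim_tr2 (d B C b g L M k Y Z : int) :
  (d %| b - M * B)%Z -> (d %| g - (L * C + k * b))%Z ->
  (d %| Y * b + Z * g - 1)%Z -> (d %| ((Y + Z * k) * M) * B + (Z * L) * C - 1)%Z.
Proof.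
move=> hb hg h.
rewrite (_ : ((Y + Z * k) * M) * B + (Z * L) * C - 1 =
  (Y * b + Z * g - 1) - Y * (b - M * B) - Z * (g - (L * C + k * b)) + (Z * k) * (M * B - b)); last by ring.
move: h; set X := Y * b + Z * g - 1 => h; clearbody X.
apply: rpredD; last by apply: dvdz_mull; rewrite -opprB rpredN.
by apply: rpredB; [apply: rpredB => //; exact: dvdz_mull | exact: dvdz_mull].
Qed.

Lemma Kc_id (c1 c2 e1 e2 lam B1 B2 C1 C2 b1 b2 g1 g2 k1 k2 q1 q2 : int) :
  b1 = B1 - k1 * c1 -> b2 = lam * B2 - k2 * c2 ->
  g1 = lam * e2 * C1 + k2 * b1 - q1 * c1 -> g2 = lam * e1 * C2 + k1 * (lam * B2) - q2 * c2 ->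
  c1 * g2 + b1 * b2 + g1 * c2 = lam * (c1 * e1 * C2 + B1 * B2 + C1 * (c2 * e2)) - c1 * c2 * (q1 + q2).
Proof. by move=> -> -> -> ->; ring. Qed.

Lemma dvdz_shift (d x z : int) : (d %| z)%Z -> (d %| x + z)%Z = (d %| x)%Z.
Proof. by move=> h; rewrite rpredDr. Qed.

Lemma tc_half (c1 c2 e2 ie2 lam t B1 C1 B2 b1 g1 b2 k1 k2 q1 : int) :
  (c1 %| ie2 * e2 - 1)%Z -> coprimez lam c1 ->
  b1 = B1 - k1 * c1 -> g1 = lam * e2 * C1 + k2 * b1 - q1 * c1 -> b2 = lam * B2 - k2 * c2 ->
  ((c1 %| t * B1 - c2 * e2)%Z && (c1 %| t * C1 + B2)%Z) =
  ((c1 %| (ie2 * t) * b1 - c2)%Z && (c1 %| (ie2 * t) * g1 + b2)%Z).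
Proof.
move=> i2 hl hb1 hg1 hb2.
have F : (c1 %| t * B1 - c2 * e2)%Z = (c1 %| (ie2 * t) * b1 - c2)%Z.
  apply/idP/idP => h.
    rewrite (_ : ie2 * t * b1 - c2 = ie2 * (t * B1 - c2 * e2) + c2 * (ie2 * e2 - 1) - (ie2 * t * k1) * c1); last by rewrite hb1; ring.
    by rewrite rpredB ?rpredD ?dvdz_mull ?dvdz_mulr.
  rewrite (_ : t * B1 - c2 * e2 = e2 * (ie2 * t * b1 - c2) - (t * b1) * (ie2 * e2 - 1) + (t * k1) * c1); last by rewrite hb1; ring.
  by rewrite rpredD ?rpredB ?dvdz_mull ?dvdz_mulr.
rewrite F; case Fc: (c1 %| (ie2 * t) * b1 - c2)%Z => //=.
rewrite (_ : ie2 * t * g1 + b2 = lam * (t * C1 + B2) + ((lam * t * C1) * (ie2 * e2 - 1) + k2 * (ie2 * t * b1 - c2) - (ie2 * t * q1) * c1)); last by rewrite hg1 hb2; ring.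
rewrite [X in _ = X]dvdz_shift; last by rewrite rpredB ?rpredD ?dvdz_mull ?dvdz_mulr.
by rewrite Gauss_dvdzr // coprimez_sym.
Qed.

Lemma P2_half (c1 c2 e1 e2 ie1 ie2 B1 B2 C2 b1 b2 g2 k1 k2 q2 P : int) :
  (c2 %| ie1 * e1 - 1)%Z -> (c2 %| ie2 * e2 - 1)%Z ->
  b1 = B1 - k1 * c1 -> b2 = e2 * ie1 * B2 - k2 * c2 ->
  g2 = e2 * ie1 * e1 * C2 + k1 * (e2 * ie1 * B2) - q2 * c2 ->
  (c2 %| P * B2 - c1 * e1)%Z -> (c2 %| P * C2 + B1)%Z ->
  (c2 %| (ie2 * P) * b2 - c1)%Z && (c2 %| (ie2 * P) * g2 + b1)%Z.
Proof.
move=> i1 i2 hb1 hb2 hg2 h1 h2.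
have hE : (c2 %| ie2 * e2 * ie1 * e1 - 1)%Z.
  rewrite (_ : ie2 * e2 * ie1 * e1 - 1 = (ie2 * e2 - 1) * (ie1 * e1) + (ie1 * e1 - 1)); last by ring.
  by rewrite rpredD ?dvdz_mulr.
apply/andP; split.
  rewrite (_ : ie2 * P * b2 - c1 = ie2 * e2 * ie1 * (P * B2 - c1 * e1) + c1 * (ie2 * e2 * ie1 * e1 - 1) - (ie2 * P * k2) * c2); last by rewrite hb2; ring.
  by rewrite rpredB ?rpredD ?dvdz_mull ?dvdz_mulr.
rewrite (_ : ie2 * P * g2 + b1 = (P * C2 + B1) + (P * C2) * (ie2 * e2 * ie1 * e1 - 1) + (k1 * ie2 * e2 * ie1) * (P * B2 - c1 * e1) + (k1 * c1) * (ie2 * e2 * ie1 * e1 - 1) - (ie2 * P * q2) * c2); last by rewrite hg2 hb1; ring.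
move: h2; set X := P * C2 + B1 => h2; clearbody X.
apply: rpredB; last by apply: dvdz_mull; apply: dvdzz.
by repeat apply: rpredD; rewrite ?dvdz_mull.
Qed.

Definition prim (D B C : nat) := (gcdn (gcdn B C) D == 1)%N.
Definition tc (D1 D2 : nat) (t : int) (B1 C1 B2 : nat) :=
  (D1%:Z %| t * B1%:Z - D2%:Z)%Z && (D1%:Z %| t * C1%:Z + B2%:Z)%Z.
Definition Kc (D1 D2 B1 C1 B2 C2 : nat) :=
  (D1 * D2 %| D1 * C2 + B1 * B2 + C1 * D2)%N.
Definition P2of (D1 D2 B1 B2 C2 : nat) : int :=
  (bez D2 B2 C2).1 * D1%:Z - (bez D2 B2 C2).2 * B1%:Z.
Lemma modn_int (x d : nat) : ((x %% d)%N)%:Z = x%:Z - (x %/ d)%N%:Z * d%:Z.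
Proof. by rewrite {2}(divn_eq x d) PoszD PoszM addrC addKr. Qed.



Lemma prim_tr (d B C b g : nat) (L R M N k : int) :
  (d%:Z %| L * R - 1)%Z -> (d%:Z %| M * N - 1)%Z -> (d%:Z %| b%:Z - M * B%:Z)%Z ->
  (d%:Z %| g%:Z - (L * C%:Z + k * b%:Z))%Z -> prim d b g = prim d B C.
Proof.
move=> hLR hMN hb hg; apply/primP/primP => [[Y [Z h]]|[Y [Z h]]].
  by exists ((Y + Z * k) * M), (Z * L); exact: (prim_tr2 hb hg h).
by exists (Y * N - Z * R * k), (Z * R); exact: (prim_tr1 hLR hMN hb hg h).
Qed.

Section Half.
Variables (c1 c2 e1 e2 ie1 ie2 : nat).
Hypotheses (hc1 : (0 < c1)%N) (hc2 : (0 < c2)%N)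
  (hI1 : ((c1 * c2)%N%:Z %| ie1%:Z * e1%:Z - 1)%Z)
  (hI2 : ((c1 * c2)%N%:Z %| ie2%:Z * e2%:Z - 1)%Z).

Let lam := (e2 * ie1)%N.

Lemma dv1 (x : int) : ((c1 * c2)%N%:Z %| x)%Z -> (c1%:Z %| x)%Z.
Proof. by apply: dvdz_trans; rewrite PoszM dvdz_mulr. Qed.
Lemma dv2 (x : int) : ((c1 * c2)%N%:Z %| x)%Z -> (c2%:Z %| x)%Z.
Proof. by apply: dvdz_trans; rewrite PoszM dvdz_mull. Qed.

Lemma lam_inv : ((c1 * c2)%N%:Z %| lam%:Z * (e1 * ie2)%N%:Z - 1)%Z.
Proof.
rewrite /lam !PoszM.
rewrite (_ : e2%:Z * ie1%:Z * (e1%:Z * ie2%:Z) - 1 = (ie2%:Z * e2%:Z - 1) * (ie1%:Z * e1%:Z) + (ie1%:Z * e1%:Z - 1)); last by ring.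
by rewrite rpredD ?dvdz_mulr.
Qed.

Lemma lam_cop : coprimez lam%:Z (c1 * c2)%N%:Z.
Proof. exact: coprimez_inv lam_inv. Qed.

Variables (B1 B2 C1 C2 : nat).
Let b1 := cmp 1 0 c1 B1.
Let b2 := cmp lam 0 c2 B2.
Let k1 := (B1 %/ c1)%N.
Let k2 := ((lam * B2) %/ c2)%N.
Let g1 := cmp (lam * e2) (k2 * b1) c1 C1.
Let g2 := cmp (lam * e1) (k1 * (lam * B2)) c2 C2.

Lemma eb1 : b1%:Z = B1%:Z - k1%:Z * c1%:Z.
Proof. by rewrite /b1 /cmp mul1n addn0 modn_int. Qed.
Lemma eb2 : b2%:Z = lam%:Z * B2%:Z - k2%:Z * c2%:Z.
Proof. by rewrite /b2 /cmp addn0 modn_int PoszM. Qed.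
Lemma eg1 : g1%:Z = (lam * e2)%N%:Z * C1%:Z + k2%:Z * b1%:Z
  - ((lam * e2 * C1 + k2 * b1) %/ c1)%N%:Z * c1%:Z.
Proof. by rewrite /g1 /cmp modn_int PoszD !PoszM. Qed.
Lemma eg2 : g2%:Z = (lam * e1)%N%:Z * C2%:Z + k1%:Z * (lam%:Z * B2%:Z)
  - ((lam * e1 * C2 + k1 * (lam * B2)) %/ c2)%N%:Z * c2%:Z.
Proof. by rewrite /g2 /cmp modn_int PoszD !PoszM. Qed.

Lemma H_prim1 : prim c1 b1 g1 = prim c1 B1 C1.
Proof.
apply: (@prim_tr _ _ _ _ _ (lam * e2)%N%:Z (e1 * ie2 * ie2)%N%:Z 1 1 k2%:Z).
- rewrite (_ : (lam * e2)%N%:Z * (e1 * ie2 * ie2)%N%:Z - 1 = (lam%:Z * (e1 * ie2)%N%:Z - 1) * (ie2%:Z * e2%:Z) + (ie2%:Z * e2%:Z - 1)); last by rewrite !PoszM; ring.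
  by rewrite rpredD ?dvdz_mulr ?dv1 ?lam_inv.
- by rewrite mulr1 subrr dvdz0.
- by rewrite eb1 mul1r (_ : B1%:Z - k1%:Z * c1%:Z - B1%:Z = - (k1%:Z * c1%:Z)) ?rpredN ?dvdz_mull //; ring.
rewrite eg1 (_ : _ - _ - _ = - (((lam * e2 * C1 + k2 * b1) %/ c1)%N%:Z * c1%:Z)); last by ring.
by rewrite rpredN dvdz_mull.
Qed.


Lemma H_prim2 : prim c2 b2 g2 = prim c2 B2 C2.
Proof.
apply: (@prim_tr _ _ _ _ _ (lam * e1)%N%:Z ie2%:Z lam%:Z (e1 * ie2)%N%:Z k1%:Z).
- rewrite (_ : (lam * e1)%N%:Z * ie2%:Z - 1 = lam%:Z * (e1 * ie2)%N%:Z - 1); last by rewrite !PoszM; ring.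
  by rewrite dv2 ?lam_inv.
- by rewrite dv2 ?lam_inv.
- by rewrite eb2 (_ : _ - _ - _ = - (k2%:Z * c2%:Z)) ?rpredN ?dvdz_mull //; ring.
rewrite eg2 eb2 (_ : _ - _ - _ = (k1%:Z * k2%:Z - ((lam * e1 * C2 + k1 * (lam * B2)) %/ c2)%N%:Z) * c2%:Z); last by ring.
by rewrite dvdz_mull.
Qed.

Lemma natdvd (m n : nat) : (m %| n)%N = (m%:Z %| n%:Z)%Z.
Proof. by rewrite dvdzE. Qed.

Lemma H_Kc : ((c1 * c2)%N%:Z %| c1%:Z * e1%:Z * C2%:Z + B1%:Z * B2%:Z + C1%:Z * (c2%:Z * e2%:Z))%Z
   = Kc c1 c2 b1 g1 b2 g2.
Proof.
rewrite /Kc natdvd !PoszD !PoszM.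
rewrite (@Kc_id c1%:Z c2%:Z e1%:Z e2%:Z lam%:Z B1%:Z B2%:Z C1%:Z C2%:Z b1%:Z b2%:Z g1%:Z g2%:Z k1%:Z k2%:Z
  ((lam * e2 * C1 + k2 * b1) %/ c1)%N%:Z ((lam * e1 * C2 + k1 * (lam * B2)) %/ c2)%N%:Z).
- rewrite -PoszM [X in _ = X]dvdz_shift; last by rewrite rpredN dvdz_mulr.
  by rewrite Gauss_dvdzr // coprimez_sym lam_cop.
- exact: eb1.
- exact: eb2.
- by rewrite eg1 PoszM.
- by rewrite eg2 PoszM.
Qed.

Lemma H_tc (t : int) : ((c1%:Z %| t * B1%:Z - c2%:Z * e2%:Z)%Z && (c1%:Z %| t * C1%:Z + B2%:Z)%Z)
   = tc c1 c2 (ie2%:Z * t) b1 g1 b2.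
Proof.
rewrite /tc (@tc_half c1%:Z c2%:Z e2%:Z ie2%:Z lam%:Z t B1%:Z C1%:Z B2%:Z b1%:Z g1%:Z b2%:Z k1%:Z k2%:Z
  ((lam * e2 * C1 + k2 * b1) %/ c1)%N%:Z) //.
- exact: dv1.
- by move: lam_cop; rewrite PoszM coprimezMr => /andP [].
- exact: eb1.
- by rewrite eg1 PoszM.
- exact: eb2.
Qed.

End Half.

Local Open Scope complex_scope.
Section E.
Variable R : realType.

Lemma eeD (x y : R) : ee (x + y) = ee x * ee y.
Proof.
rewrite /ee mulrDr cosD sinD /=.
by congr (_ +i* _); rewrite addrC.
Qed.

Lemma ee0 : ee (0:R) = 1.
Proof. by rewrite /ee mulr0 cos0 sin0. Qed.

Lemma ee_nat (n : nat) : ee (n%:R : R) = 1.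
Proof.
elim: n => [|n IH]; first by rewrite ee0.
rewrite -addn1 natrD eeD IH mul1r /ee mulr1.
have -> : 2 * pi = pi *+ 2 :> R by rewrite mulr_natl.
by rewrite cos2pi sin2pi.
Qed.

Lemma eeN (x : R) : ee (- x) = (ee x)^-1.
Proof.
have h : ee x * ee (- x) = 1 by rewrite -eeD subrr ee0.
have hx : ee x != 0 by apply/eqP => e; move: h; rewrite e mul0r => /eqP; rewrite eq_sym oner_eq0.
by rewrite -[LHS]mul1r -(mulVf hx) -mulrA h mulr1.
Qed.

Lemma ee_int (n : int) : ee (n%:~R : R) = 1.
Proof.
case: n => n.
  by rewrite -pmulrn ee_nat.
rewrite NegzE rmorphN /= eeN -pmulrn ee_nat invr1 //.
Qed.


Lemma eeZ (x : R) (n : int) : ee (x + n%:~R) = ee x.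
Proof. by rewrite eeD ee_int mulr1. Qed.

Lemma eDD (k l : int) (D : nat) : eD R (k + l) D = eD R k D * eD R l D.
Proof. by rewrite /eD rmorphD /= mulrDl eeD. Qed.

Lemma eD_dvd (k : int) (D : nat) : (0 < D)%N -> (D%:Z %| k)%Z -> eD R k D = 1.
Proof.
move=> D0 /dvdzP [q ->]; rewrite /eD rmorphM /= -mulrA.
have -> : (D%:Z)%:~R / D%:R = 1 :> R.
  by rewrite -pmulrn divff // pnatr_eq0 -lt0n.
by rewrite mulr1 ee_int.
Qed.

Lemma eD_mod (k l : int) (D : nat) : (0 < D)%N -> (D%:Z %| k - l)%Z -> eD R k D = eD R l D.
Proof.
move=> D0 h; have -> : k = (k - l) + l by rewrite subrK.
by rewrite eDD eD_dvd // mul1r.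
Qed.

Lemma eDM (k : int) (D m : nat) : (0 < m)%N -> eD R (k * m%:Z) (D * m) = eD R k D.
Proof.
move=> m0; case: (posnP D) => [->|D0].
  by rewrite mul0n /eD !invr0 !mulr0.
rewrite /eD rmorphM /= natrM -pmulrn.
congr ee; rewrite invfM mulrACA divff ?mulr1 // pnatr_eq0 -lt0n //.
Qed.

Lemma ee_ne1 (x : R) : 0 < x < 1 -> ee x != 1.
Proof.
move=> /andP [x0 x1]; apply/eqP => h.
set z := ee (x / 2).
have hz : z * z = 1 by rewrite -eeD -splitr.
have : (z - 1) * (z + 1) = 0 by rewrite mulrDr mulr1 mulrBl mul1r hz addrA subrK subrr.
move/eqP; rewrite mulf_eq0 => /orP [] /eqP e.
  have : complex.Im z = 0 by rewrite (_ : z = 1) //; apply/eqP; rewrite -subr_eq0 e.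
  rewrite /z /= => /eqP; apply/negP; rewrite gt_eqF // sin_gt0_pi //.
  have p0 := pi_gt0 R.
  apply/andP; split; nra.
have ez : z = -1 by rewrite -(addrK 1 z) e sub0r.
have : complex.Im z = 0 by rewrite ez /= oppr0.
rewrite /z /= => /eqP; apply/negP; rewrite gt_eqF // sin_gt0_pi //.
have p0 := pi_gt0 R.
apply/andP; split; nra.
Qed.



Lemma eD_ne1 (k : int) (D : nat) : (0 < D)%N -> ~~ (D%:Z %| k)%Z -> eD R k D != 1.
Proof.
move=> D0 nd.
have Dz : D%:Z != 0 by rewrite eqz_nat -lt0n.
rewrite (@eD_mod k (k %% D%:Z)%Z) //; last first.
  by rewrite {1}(divz_eq k D%:Z) addrK dvdz_mull.
have r0 := modz_ge0 k Dz.
have rD := ltz_mod k Dz.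
have rn0 : (k %% D%:Z)%Z != 0.
  by apply/eqP => e; move: nd; rewrite (_ : (D%:Z %| k)%Z) //; apply/dvdz_mod0P.
apply: ee_ne1; apply/andP; split.
  rewrite divr_gt0 // ?ltr0z ?lt_def ?rn0 ?ltr0n //.
  by rewrite pnatr_eq0 ler0n andbT -lt0n.
rewrite ltr_pdivrMr ?ltr0n // mul1r pmulrn ltr_int.
by move: rD; rewrite ger0_norm.
Qed.

Lemma eD_pow (k : int) (D x : nat) : eD R (x%:Z * k) D = (eD R k D) ^+ x.
Proof.
elim: x => [|x IH]; first by rewrite mul0r expr0 /eD mul0r ee0.
by rewrite -addn1 PoszD mulrDl mul1r eDD IH addn1 exprSr.
Qed.

Lemma eD_orth (k : int) (D : nat) : (0 < D)%N ->
  \sum_(x < D) eD R ((x : nat)%:Z * k) D = if (D%:Z %| k)%Z then D%:R else 0.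
Proof.
move=> D0; case: ifP => dk.
  rewrite (eq_bigr (fun _ => 1)); first by rewrite sumr_const card_ord.
  by move=> x _; rewrite eD_dvd // dvdz_mull.
under eq_bigr do rewrite eD_pow.
have h := subrX1 (eD R k D) D.
rewrite -eD_pow eD_dvd ?dvdz_mulr // subrr in h.
apply/eqP; move/eqP: h; rewrite eq_sym mulf_eq0 subr_eq0 (negbTE (eD_ne1 _ _)) ?dk //.
Qed.


Definition Gs (a t : int) (u D1 D2 : nat) : R[i] :=
  \sum_(B1 < D1) \sum_(C1 < D1) \sum_(B2 < D2) \sum_(C2 < D2)
   if [&& prim D1 B1 C1, prim D2 B2 C2, Kc D1 D2 B1 C1 B2 C2, (B2 == u :> nat)
        & tc D1 D2 t B1 C1 B2]
   then eD R (a * (B1 : nat)%:Z) D1 * eD R (P2of D1 D2 B1 B2 C2) D2 else 0.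

Lemma sum4_mulr (m n p q : nat) (F : 'I_m -> 'I_n -> 'I_p -> 'I_q -> R[i]) (g : R[i]) :
  (\sum_(a < m) \sum_(b < n) \sum_(c < p) \sum_(d < q) F a b c d) * g =
  \sum_(a < m) \sum_(b < n) \sum_(c < p) \sum_(d < q) (F a b c d * g).
Proof.
rewrite mulr_suml; apply: eq_bigr => a _.
rewrite mulr_suml; apply: eq_bigr => b _.
rewrite mulr_suml; apply: eq_bigr => c _.
by rewrite mulr_suml.
Qed.

Lemma small_dvd (D x y : nat) : (x < D)%N -> (y < D)%N -> (D%:Z %| x%:Z - y%:Z)%Z = (x == y).
Proof.
move=> xD yD; rewrite -eqz_mod_dvd !modz_nat !modn_small //.
Qed.

Lemma Kc_1 (D1 D2 B1 C1 B2 C2 : nat) : Kc D1 D2 B1 C1 B2 C2 ->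
  (D1%:Z %| B1%:Z * B2%:Z + C1%:Z * D2%:Z)%Z.
Proof.
rewrite /Kc => h.
have : (D1%:Z %| (D1 * C2 + B1 * B2 + C1 * D2)%N%:Z)%Z.
  by rewrite dvdzE /= (dvdn_trans (dvdn_mulr D2 (dvdnn D1)) h).
rewrite !PoszD !PoszM => h2.
rewrite (_ : B1%:Z * B2%:Z + C1%:Z * D2%:Z = (D1%:Z * C2%:Z + B1%:Z * B2%:Z + C1%:Z * D2%:Z) - C2%:Z * D1%:Z); last by ring.
by rewrite rpredB // dvdz_mull.
Qed.

Lemma Kc_2 (D1 D2 B1 C1 B2 C2 : nat) : Kc D1 D2 B1 C1 B2 C2 ->
  (D2%:Z %| B2%:Z * B1%:Z + C2%:Z * D1%:Z)%Z.
Proof.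
rewrite /Kc => h.
have : (D2%:Z %| (D1 * C2 + B1 * B2 + C1 * D2)%N%:Z)%Z.
  by rewrite dvdzE /= (dvdn_trans (dvdn_mull D1 (dvdnn D2)) h).
rewrite !PoszD !PoszM => h2.
rewrite (_ : B2%:Z * B1%:Z + C2%:Z * D1%:Z = (D1%:Z * C2%:Z + B1%:Z * B2%:Z + C1%:Z * D2%:Z) - C1%:Z * D2%:Z); last by ring.
by rewrite rpredB // dvdz_mull.
Qed.

Lemma Shat_G (a t : int) (u D1 D2 : nat) : (0 < D1)%N -> (0 < D2)%N -> (u < D2)%N ->
  Shat R a u%:Z t 1 D1 D2 = Gs a t u D1 D2.
Proof.
move=> D10 D20 uD.
rewrite /Shat /KlS.
under eq_bigr do under eq_bigr do rewrite sum4_mulr sum4_mulr.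
rewrite swap6 mulr_sumr; apply: eq_bigr => B1 _.
rewrite mulr_sumr; apply: eq_bigr => C1 _.
rewrite mulr_sumr; apply: eq_bigr => B2 _.
rewrite mulr_sumr; apply: eq_bigr => C2 _.
rewrite /= /prim /Kc.
have [p1|p1] := boolP (gcdn (gcdn B1 C1) D1 == 1)%N; have [p2|p2] := boolP (gcdn (gcdn B2 C2) D2 == 1)%N;
  have [k|k] := boolP (D1 * D2 %| D1 * C2 + B1 * B2 + C1 * D2)%N; rewrite /=;
  try (by rewrite big1 ?mulr0 // => x _; rewrite big1 // => y _; rewrite !mul0r).
set P1 := (bez D1 B1 C1).1 * _ - _.
rewrite -/(P2of D1 D2 B1 B2 C2); set P2 := P2of _ _ _ _ _.
have e : forall x y : nat, eD R (a * B1 + x%:Z * P1) D1 * eD R (y%:Z * B2 + 1 * P2) D2 *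
   eD R (- (x%:Z * t)) D1 * eD R (- (y%:Z * u%:Z)) D2 =
   (eD R (a * B1) D1 * eD R P2 D2) * (eD R (x%:Z * (P1 - t)) D1 * eD R (y%:Z * (B2%:Z - u%:Z)) D2).
  move=> x y; rewrite !mulrBr !eDD !mul1r; ring.
under eq_bigr => x _ do under eq_bigr => y _ do rewrite e.
under eq_bigr => x _ do rewrite -mulr_sumr -mulr_sumr.
rewrite -mulr_sumr -mulr_suml eD_orth // eD_orth //.
rewrite small_dvd ?ltn_ord // /P1 (charP t (bezP D10 p1) (Kc_1 k)).
rewrite -/(tc D1 D2 t B1 C1 B2).
case: (B2 == u :> nat); case: (tc _ _ _ _ _ _); rewrite /= ?mulr0 ?mul0r //.
  rewrite [LHS]mulrC -mulrA -natrM.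
  by rewrite mulrA mulfK // pnatr_eq0 -lt0n muln_gt0 D10 D20.
by rewrite !mulr0.
Qed.


Lemma dvdz_crt (c e : nat) (x : int) : coprime c e -> (c%:Z %| x)%Z -> (e%:Z %| x)%Z -> ((c * e)%N%:Z %| x)%Z.
Proof. by move=> ce h1 h2; rewrite PoszM Gauss_dvdz ?h1 ?h2 // coprimezE. Qed.

Lemma eD_split (c e i j : nat) (k : int) : (0 < c)%N -> (0 < e)%N -> coprime c e ->
  (c%:Z %| i%:Z * e%:Z - 1)%Z -> (e%:Z %| j%:Z * c%:Z - 1)%Z ->
  eD R k (c * e) = eD R (i%:Z * k) c * eD R (j%:Z * k) e.
Proof.
move=> c0 e0 ce hi hj.
rewrite -(eDM (i%:Z * k) c e0) -(eDM (j%:Z * k) e c0) [(e * c)%N]mulnC -eDD.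
apply: eD_mod; first by rewrite muln_gt0 c0 e0.
rewrite (_ : k - _ = - (k * ((i%:Z * e%:Z - 1) + j%:Z * c%:Z))); last by ring.
rewrite rpredN dvdz_mull // dvdz_crt //.
  by rewrite rpredD ?dvdz_mull // dvdzz.
rewrite (_ : _ + _ = (j%:Z * c%:Z - 1) + i%:Z * e%:Z); last by ring.
by rewrite rpredD ?dvdz_mull ?dvdzz.
Qed.

Lemma H_a (c ie B : nat) (a : int) : (0 < c)%N ->
  eD R (ie%:Z * (a * B%:Z)) c = eD R ((a * ie%:Z) * (cmp 1 0 c B)%:Z) c.
Proof.
move=> c0; apply: eD_mod => //.
rewrite /cmp mul1n addn0 modn_int.
rewrite (_ : _ - _ = (a * ie%:Z * (B %/ c)%N%:Z) * c%:Z); last by ring.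
by rewrite dvdz_mull.
Qed.

Lemma H_P2 (c1 c2 e1 e2 ie1 ie2 B1 B2 C2 : nat) (P : int) : (0 < c2)%N ->
  (c2%:Z %| ie1%:Z * e1%:Z - 1)%Z -> (c2%:Z %| ie2%:Z * e2%:Z - 1)%Z ->
  (c2%:Z %| P * B2%:Z - (c1 * e1)%N%:Z)%Z -> (c2%:Z %| P * C2%:Z + B1%:Z)%Z ->
  prim c2 (cmp (e2 * ie1) 0 c2 B2) (cmp (e2 * ie1 * e1) (B1 %/ c1 * (e2 * ie1 * B2)) c2 C2) ->
  (c2%:Z %| (cmp (e2 * ie1) 0 c2 B2)%:Z * (cmp 1 0 c1 B1)%:Z
      + (cmp (e2 * ie1 * e1) (B1 %/ c1 * (e2 * ie1 * B2)) c2 C2)%:Z * c1%:Z)%Z ->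
  eD R (ie2%:Z * P) c2 = eD R (P2of c1 c2 (cmp 1 0 c1 B1) (cmp (e2 * ie1) 0 c2 B2)
           (cmp (e2 * ie1 * e1) (B1 %/ c1 * (e2 * ie1 * B2)) c2 C2)) c2.
Proof.
move=> c20 i1 i2 h1 h2 pr K.
symmetry; apply: eD_mod => //.
rewrite /P2of (charP _ (bezP c20 pr) K).
apply: (@P2_half c1%:Z c2%:Z e1%:Z e2%:Z ie1%:Z ie2%:Z B1%:Z B2%:Z C2%:Z _ _ _ (B1 %/ c1)%N%:Z
   ((e2 * ie1 * B2) %/ c2)%N%:Z ((e2 * ie1 * e1 * C2 + B1 %/ c1 * (e2 * ie1 * B2)) %/ c2)%N%:Z P) => //.
- by rewrite /cmp mul1n addn0 modn_int.
- by rewrite /cmp addn0 modn_int !PoszM.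
- by rewrite /cmp modn_int PoszD !PoszM.
Qed.

Definition Hs (a t : int) (u D1 D2 B1 B2 C1 C2 : nat) : R[i] :=
  if [&& prim D1 B1 C1, prim D2 B2 C2, Kc D1 D2 B1 C1 B2 C2, (B2 == u :> nat)
        & tc D1 D2 t B1 C1 B2]
  then eD R (a * B1%:Z) D1 * eD R (P2of D1 D2 B1 B2 C2) D2 else 0.

Definition Gs2 (a t : int) (u D1 D2 : nat) : R[i] :=
  \sum_(B1 < D1) \sum_(B2 < D2) \sum_(C1 < D1) \sum_(C2 < D2) Hs a t u D1 D2 B1 B2 C1 C2.

Lemma Gs_Gs2 (a t : int) (u D1 D2 : nat) : Gs a t u D1 D2 = Gs2 a t u D1 D2.
Proof.
rewrite /Gs /Gs2; apply: eq_bigr => B1 _.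
by rewrite exchange_big.
Qed.

Lemma split10 (a1 a2 b1 b2 c1 c2 d1 d2 f1 f2 : bool) (X Y Z : R[i]) :
  ([&& a1, b1, c1, d1 & f1] -> [&& a2, b2, c2, d2 & f2] -> X = Y * Z) ->
  (if [&& a1 && a2, b1 && b2, c1 && c2, d1 && d2 & f1 && f2] then X else 0) =
  (if [&& a1, b1, c1, d1 & f1] then Y else 0) * (if [&& a2, b2, c2, d2 & f2] then Z else 0).
Proof.
case: a1; case: b1; case: c1; case: d1; case: f1; rewrite /= ?mul0r //;
case: a2; case: b2; case: c2; case: d2; case: f2; rewrite /= ?mulr0 //; by move=> ->.
Qed.


Lemma cabsM (z w : R[i]) : cabs (z * w) = cabs z * cabs w.
Proof.
rewrite /cabs normrM (normc_def z) (normc_def w) /=.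
by first [rewrite mulr0 subr0 | rewrite mul0r subr0 | simpl; rewrite mulr0 subr0 | ring].
Qed.

Lemma cabs_ge0 (z : R[i]) : 0 <= cabs z.
Proof. by rewrite /cabs normc_def /= sqrtr_ge0. Qed.

Definition Xs (a s : int) (D1 D2 : nat) : R := \sum_(u < D2) cabs (Gs2 a s u D1 D2).

Lemma Xs_ge0 (a s : int) (D1 D2 : nat) : 0 <= Xs a s D1 D2.
Proof. by apply: sumr_ge0 => u _; apply: cabs_ge0. Qed.

Lemma Hs_per (a a' s s' : int) (u D1 D2 B1 B2 C1 C2 : nat) : (0 < D1)%N ->
  (D1%:Z %| a - a')%Z -> (D1%:Z %| s - s')%Z ->
  Hs a s u D1 D2 B1 B2 C1 C2 = Hs a' s' u D1 D2 B1 B2 C1 C2.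
Proof.
move=> D0 ha hs; rewrite /Hs /tc.
have e1 : (D1%:Z %| s * B1%:Z - D2%:Z)%Z = (D1%:Z %| s' * B1%:Z - D2%:Z)%Z.
  rewrite (_ : s * B1%:Z - D2%:Z = (s' * B1%:Z - D2%:Z) + (s - s') * B1%:Z); last by ring.
  by rewrite dvdz_shift // dvdz_mulr.
have e2 : (D1%:Z %| s * C1%:Z + B2%:Z)%Z = (D1%:Z %| s' * C1%:Z + B2%:Z)%Z.
  rewrite (_ : s * C1%:Z + B2%:Z = (s' * C1%:Z + B2%:Z) + (s - s') * C1%:Z); last by ring.
  by rewrite dvdz_shift // dvdz_mulr.
rewrite e1 e2 (@eD_mod (a * B1%:Z) (a' * B1%:Z)) //.
by rewrite -mulrBl dvdz_mulr.
Qed.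

Lemma Xs_per (a a' s s' : int) (D1 D2 : nat) : (0 < D1)%N ->
  (D1%:Z %| a - a')%Z -> (D1%:Z %| s - s')%Z -> Xs a s D1 D2 = Xs a' s' D1 D2.
Proof.
move=> D0 ha hs; rewrite /Xs /Gs2; apply: eq_bigr => u _; congr cabs.
do 4 (apply: eq_bigr => ? _); exact: Hs_per.
Qed.

Section PW.
Variables (c1 c2 e1 e2 ie1 ie2 ic1 ic2 : nat).
Hypotheses (hc1 : (0 < c1)%N) (hc2 : (0 < c2)%N) (he1 : (0 < e1)%N) (he2 : (0 < e2)%N)
  (hcop : coprime (c1 * c2) (e1 * e2))
  (hI1 : ((c1 * c2)%N%:Z %| ie1%:Z * e1%:Z - 1)%Z)
  (hI2 : ((c1 * c2)%N%:Z %| ie2%:Z * e2%:Z - 1)%Z)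
  (hJ1 : ((e1 * e2)%N%:Z %| ic1%:Z * c1%:Z - 1)%Z)
  (hJ2 : ((e1 * e2)%N%:Z %| ic2%:Z * c2%:Z - 1)%Z).

Lemma cop_c1e1 : coprime c1 e1.
Proof.
move: hcop; rewrite coprimeMl => /andP [h _].
by move: h; rewrite coprimeMr => /andP [].
Qed.
Lemma cop_c2e2 : coprime c2 e2.
Proof.
move: hcop; rewrite coprimeMl => /andP [_ h].
by move: h; rewrite coprimeMr => /andP [].
Qed.

Lemma cop_lam_c : coprime (e2 * ie1) c2.
Proof.
have := lam_cop hI1 hI2; rewrite [X in coprimez _ X]PoszM coprimezMr => /andP [_].
by rewrite coprimezE.
Qed.
Lemma cop_lam_e : coprime (c2 * ic1) e2.
Proof.
have := lam_cop hJ1 hJ2; rewrite [X in coprimez _ X]PoszM coprimezMr => /andP [_].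
by rewrite coprimezE.
Qed.


Lemma dvc1 (x : int) : ((c1 * e1)%N%:Z %| x)%Z = (c1%:Z %| x)%Z && (e1%:Z %| x)%Z.
Proof. by rewrite PoszM Gauss_dvdz // coprimezE cop_c1e1. Qed.
Lemma dvc2 (x : int) : ((c2 * e2)%N%:Z %| x)%Z = (c2%:Z %| x)%Z && (e2%:Z %| x)%Z.
Proof. by rewrite PoszM Gauss_dvdz // coprimezE cop_c2e2. Qed.

Lemma PW (a t : int) (u B1 B2 C1 C2 : nat) :
  (B1 < c1 * e1)%N -> (B2 < c2 * e2)%N -> (u < c2 * e2)%N ->
  Hs a t u (c1 * e1) (c2 * e2) B1 B2 C1 C2 =
  Hs (a * ie1%:Z) (ie2%:Z * t) (cmp (e2 * ie1) 0 c2 u) c1 c2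
     (cmp 1 0 c1 B1) (cmp (e2 * ie1) 0 c2 B2)
     (cmp (e2 * ie1 * e2) ((e2 * ie1 * B2) %/ c2 * cmp 1 0 c1 B1) c1 C1)
     (cmp (e2 * ie1 * e1) (B1 %/ c1 * (e2 * ie1 * B2)) c2 C2) *
  Hs (a * ic1%:Z) (ic2%:Z * t) (cmp (c2 * ic1) 0 e2 u) e1 e2
     (cmp 1 0 e1 B1) (cmp (c2 * ic1) 0 e2 B2)
     (cmp (c2 * ic1 * c2) ((c2 * ic1 * B2) %/ e2 * cmp 1 0 e1 B1) e1 C1)
     (cmp (c2 * ic1 * c1) (B1 %/ e1 * (c2 * ic1 * B2)) e2 C2).
Proof.
move=> B1l B2l ul.
have p1 : prim (c1 * e1) B1 C1 = prim c1 (cmp 1 0 c1 B1)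
     (cmp (e2 * ie1 * e2) ((e2 * ie1 * B2) %/ c2 * cmp 1 0 c1 B1) c1 C1)
   && prim e1 (cmp 1 0 e1 B1) (cmp (c2 * ic1 * c2) ((c2 * ic1 * B2) %/ e2 * cmp 1 0 e1 B1) e1 C1).
  by rewrite (H_prim1 hI1 hI2) (H_prim1 hJ1 hJ2) /prim -!/(coprime _ _) coprimeMr.
have p2 : prim (c2 * e2) B2 C2 = prim c2 (cmp (e2 * ie1) 0 c2 B2) (cmp (e2 * ie1 * e1) (B1 %/ c1 * (e2 * ie1 * B2)) c2 C2)
   && prim e2 (cmp (c2 * ic1) 0 e2 B2) (cmp (c2 * ic1 * c1) (B1 %/ e1 * (c2 * ic1 * B2)) e2 C2).
  by rewrite (H_prim2 hI1 hI2) (H_prim2 hJ1 hJ2) /prim -!/(coprime _ _) coprimeMr.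
have K : Kc (c1 * e1) (c2 * e2) B1 C1 B2 C2 =
   Kc c1 c2 (cmp 1 0 c1 B1)
         (cmp (e2 * ie1 * e2) ((e2 * ie1 * B2) %/ c2 * cmp 1 0 c1 B1) c1 C1)
         (cmp (e2 * ie1) 0 c2 B2)
         (cmp (e2 * ie1 * e1) (B1 %/ c1 * (e2 * ie1 * B2)) c2 C2)
   && Kc e1 e2 (cmp 1 0 e1 B1)
         (cmp (c2 * ic1 * c2) ((c2 * ic1 * B2) %/ e2 * cmp 1 0 e1 B1) e1 C1)
         (cmp (c2 * ic1) 0 e2 B2)
         (cmp (c2 * ic1 * c1) (B1 %/ e1 * (c2 * ic1 * B2)) e2 C2).
  rewrite -(H_Kc hI1 hI2) -(H_Kc hJ1 hJ2) /Kc natdvd.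
  rewrite (_ : (c1 * e1 * (c2 * e2))%N = ((c1 * c2) * (e1 * e2))%N); last by rewrite mulnACA.
  rewrite PoszM Gauss_dvdz ?coprimezE // !PoszD !PoszM.
  by congr andb; congr dvdz; ring.
have U : (B2 == u) = (cmp (e2 * ie1) 0 c2 B2 == cmp (e2 * ie1) 0 c2 u) &&
                     (cmp (c2 * ic1) 0 e2 B2 == cmp (c2 * ic1) 0 e2 u).
  apply/eqP/andP => [-> //|[/eqP h1 /eqP h2]].
  exact: (crt_inj cop_c2e2 cop_lam_c cop_lam_e B2l ul h1 h2).
have T : tc (c1 * e1) (c2 * e2) t B1 C1 B2 =
   tc c1 c2 (ie2%:Z * t) (cmp 1 0 c1 B1)
         (cmp (e2 * ie1 * e2) ((e2 * ie1 * B2) %/ c2 * cmp 1 0 c1 B1) c1 C1)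
         (cmp (e2 * ie1) 0 c2 B2)
   && tc e1 e2 (ic2%:Z * t) (cmp 1 0 e1 B1)
         (cmp (c2 * ic1 * c2) ((c2 * ic1 * B2) %/ e2 * cmp 1 0 e1 B1) e1 C1)
         (cmp (c2 * ic1) 0 e2 B2).
  rewrite -(H_tc hI1 hI2) -(H_tc hJ1 hJ2) /tc !dvc1 !PoszM [e2%:Z * c2%:Z]mulrC.
  by case: (c1%:Z %| _)%Z; case: (c1%:Z %| _)%Z; case: (e1%:Z %| _)%Z; case: (e1%:Z %| _)%Z.
have pb : prim (c2 * e2) B2 C2 = _ := p2.
have kb : Kc (c1 * e1) (c2 * e2) B1 C1 B2 C2 = _ := K.
rewrite /Hs p1 p2 K U T; apply: split10 => /and5P [_ pc2 Kc_ _ _] /and5P [_ pe2 Ke _ _].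
have pB : prim (c2 * e2) B2 C2 by rewrite pb pc2 pe2.
have kB : Kc (c1 * e1) (c2 * e2) B1 C1 B2 C2 by rewrite kb Kc_ Ke.
have c2e20 : (0 < c2 * e2)%N by rewrite muln_gt0 hc2 he2.
set P := P2of (c1 * e1) (c2 * e2) B1 B2 C2.
have /andP [hPB hPC] : ((c2 * e2)%N%:Z %| P * B2%:Z - (c1 * e1)%N%:Z)%Z && ((c2 * e2)%N%:Z %| P * C2%:Z + B1%:Z)%Z.
  by rewrite -(charP P (bezP c2e20 pB) (Kc_2 kB)) /P /P2of subrr dvdz0.
move: hPB hPC; rewrite !dvc2 => /andP [hPBc hPBe] /andP [hPCc hPCe].
rewrite (@eD_split c1 e1 ie1 ic1 (a * B1%:Z) hc1 he1 cop_c1e1 (dv1 hI1) (dv1 hJ1)).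
rewrite (@eD_split c2 e2 ie2 ic2 P hc2 he2 cop_c2e2 (dv2 hI2) (dv2 hJ2)).
rewrite (H_a _ _ _ hc1) (H_a _ _ _ he1).
rewrite (H_P2 hc2 (dv2 hI1) (dv2 hI2) hPBc hPCc pc2 (Kc_2 Kc_)).
rewrite (@H_P2 e1 e2 c1 c2 ic1 ic2 B1 B2 C2 P he2 (dv2 hJ1) (dv2 hJ2)) //.
- by rewrite mulrACA.
- by rewrite mulnC.
- exact: (Kc_2 Ke).
Qed.


Lemma cop_nat_c (x : nat) : ((c1 * c2)%N%:Z %| x%:Z * e1%:Z - 1)%Z -> coprime x c1 && coprime x c2.
Proof. by move/coprimez_inv; rewrite PoszM coprimezMr !coprimezE. Qed.

Lemma cops : [/\ coprime (e2 * ie1 * e1) c2, coprime (c2 * ic1 * c1) e2,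
  coprime (e2 * ie1 * e2) c1, coprime (c2 * ic1 * c2) e1 &
  [/\ coprime (e2 * ie1) c2, coprime (c2 * ic1) e2, coprime 1 c1 & coprime 1 e1]].
Proof.
have := lam_cop hI1 hI2; rewrite [X in coprimez _ X]PoszM coprimezMr !coprimezE /= => /andP [l1 l2].
have := lam_cop hJ1 hJ2; rewrite [X in coprimez _ X]PoszM coprimezMr !coprimezE /= => /andP [m1 m2].
move: hcop; rewrite coprimeMl !coprimeMr => /andP [/andP [x11 x12] /andP [x21 x22]].
rewrite ![coprime (_ * _ * _) _]coprimeMl l1 l2 m1 m2 !coprime1n /=.
by split => //; rewrite coprime_sym.
Qed.

Lemma Gs2_mult (a t : int) (u : nat) : (u < c2 * e2)%N ->
  Gs2 a t u (c1 * e1) (c2 * e2) =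
  Gs2 (a * ie1%:Z) (ie2%:Z * t) (cmp (e2 * ie1) 0 c2 u) c1 c2 *
  Gs2 (a * ic1%:Z) (ic2%:Z * t) (cmp (c2 * ic1) 0 e2 u) e1 e2.
Proof.
move=> ul; have [k1 k2 k3 k4 [k5 k6 k7 k8]] := cops.
rewrite /Gs2.
under eq_bigr => B1 _ do under eq_bigr => B2 _ do under eq_bigr => C1 _ do under eq_bigr => C2 _ do
  rewrite (PW _ _ _ _ (ltn_ord B1) (ltn_ord B2) ul).
under eq_bigr => B1 _ do under eq_bigr => B2 _ do under eq_bigr => C1 _ do
  rewrite (@crt_sum2 _ c2 e2 (e2 * ie1 * e1) (c2 * ic1 * c1) (B1 %/ c1 * (e2 * ie1 * B2)) (B1 %/ e1 * (c2 * ic1 * B2))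
     (fun g => Hs (a * ie1%:Z) (ie2%:Z * t) (cmp (e2 * ie1) 0 c2 u) c1 c2
     (cmp 1 0 c1 B1) (cmp (e2 * ie1) 0 c2 B2)
     (cmp (e2 * ie1 * e2) ((e2 * ie1 * B2) %/ c2 * cmp 1 0 c1 B1) c1 C1) g)
     (fun g => Hs (a * ic1%:Z) (ic2%:Z * t) (cmp (c2 * ic1) 0 e2 u) e1 e2
     (cmp 1 0 e1 B1) (cmp (c2 * ic1) 0 e2 B2)
     (cmp (c2 * ic1 * c2) ((c2 * ic1 * B2) %/ e2 * cmp 1 0 e1 B1) e1 C1) g) hc2 he2 cop_c2e2 k1 k2).
under eq_bigr => B1 _ do under eq_bigr => B2 _ do
  rewrite (@crt_sum2 _ c1 e1 (e2 * ie1 * e2) (c2 * ic1 * c2) ((e2 * ie1 * B2) %/ c2 * cmp 1 0 c1 B1) ((c2 * ic1 * B2) %/ e2 * cmp 1 0 e1 B1)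
     (fun g1 => \sum_(g < c2) Hs (a * ie1%:Z) (ie2%:Z * t) (cmp (e2 * ie1) 0 c2 u) c1 c2
     (cmp 1 0 c1 B1) (cmp (e2 * ie1) 0 c2 B2) g1 g)
     (fun g1 => \sum_(g < e2) Hs (a * ic1%:Z) (ic2%:Z * t) (cmp (c2 * ic1) 0 e2 u) e1 e2
     (cmp 1 0 e1 B1) (cmp (c2 * ic1) 0 e2 B2) g1 g) hc1 he1 cop_c1e1 k3 k4).
under eq_bigr => B1 _ do
  rewrite (@crt_sum2 _ c2 e2 (e2 * ie1) (c2 * ic1) 0 0
     (fun b2 => \sum_(g1 < c1) \sum_(g < c2) Hs (a * ie1%:Z) (ie2%:Z * t) (cmp (e2 * ie1) 0 c2 u) c1 c2
     (cmp 1 0 c1 B1) b2 g1 g)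
     (fun b2 => \sum_(g1 < e1) \sum_(g < e2) Hs (a * ic1%:Z) (ic2%:Z * t) (cmp (c2 * ic1) 0 e2 u) e1 e2
     (cmp 1 0 e1 B1) b2 g1 g) hc2 he2 cop_c2e2 k5 k6).
by rewrite (@crt_sum2 _ c1 e1 1 1 0 0
     (fun b1 => \sum_(b2 < c2) \sum_(g1 < c1) \sum_(g < c2) Hs (a * ie1%:Z) (ie2%:Z * t) (cmp (e2 * ie1) 0 c2 u) c1 c2
     b1 b2 g1 g)
     (fun b1 => \sum_(b2 < e2) \sum_(g1 < e1) \sum_(g < e2) Hs (a * ic1%:Z) (ic2%:Z * t) (cmp (c2 * ic1) 0 e2 u) e1 e2
     b1 b2 g1 g) hc1 he1 cop_c1e1 k7 k8).
Qed.


Lemma X_mult (a s : int) :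
  Xs a s (c1 * e1) (c2 * e2) = Xs (a * ie1%:Z) (ie2%:Z * s) c1 c2 * Xs (a * ic1%:Z) (ic2%:Z * s) e1 e2.
Proof.
have [_ _ _ _ [k5 k6 _ _]] := cops.
rewrite /Xs.
under eq_bigr => u _ do rewrite (Gs2_mult _ _ (ltn_ord u)) cabsM.
by rewrite (@crt_sum2 _ c2 e2 (e2 * ie1) (c2 * ic1) 0 0
  (fun v => cabs (Gs2 (a * ie1%:Z) (ie2%:Z * s) v c1 c2))
  (fun v => cabs (Gs2 (a * ic1%:Z) (ic2%:Z * s) v e1 e2)) hc2 he2 cop_c2e2 k5 k6).
Qed.

End PW.

Lemma Rcal_X (t : int) (D1 D2 : nat) : (0 < D1)%N -> (0 < D2)%N ->
  Rcal R t D1 D2 = \big[Num.max/0]_(a < D1 | coprime a D1) \big[Num.max/0]_(b < D1 | coprime b D1)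
     Xs (a : nat)%:Z ((b : nat)%:Z * t) D1 D2.
Proof.
move=> D10 D20; rewrite /Rcal; apply: eq_bigr => a _; apply: eq_bigr => b _.
by rewrite /Xs; apply: eq_bigr => u _; rewrite Shat_G // Gs_Gs2.
Qed.

Lemma max_crt (c e l m : nat) (G : nat -> nat -> R) : (0 < c)%N -> (0 < e)%N ->
  coprime c e -> coprime l c -> coprime m e ->
  \big[Num.max/0]_(x < c * e | coprime x (c * e)) G (cmp l 0 c x) (cmp m 0 e x) =
  \big[Num.max/0]_(i < c | coprime i c) \big[Num.max/0]_(j < e | coprime j e) G i j.
Proof.
move=> c0 e0 ce lc me.
rewrite (pair_big_idem (maxxx 0)) /=.
rewrite (reindex _ (onW_bij _ (crt_bij 0 0 c0 e0 ce lc me))) /=.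
apply: eq_bigl => x /=.
by rewrite /cmp !addn0 !coprime_modl !coprimeMl lc me /= coprimeMr.
Qed.

Lemma bigmax_ge0 (I : finType) (P : pred I) (F : I -> R) :
  0 <= \big[Num.max/0]_(i | P i) F i.
Proof. by elim/big_rec: _ => // i x _ hx; rewrite le_max hx orbT. Qed.

Lemma mulr_bigmax (I : finType) (P : pred I) (F : I -> R) (y : R) : 0 <= y ->
  y * \big[Num.max/0]_(i | P i) F i = \big[Num.max/0]_(i | P i) (y * F i).
Proof.
move=> y0; apply: (big_morph (fun z => y * z)); last exact: mulr0.
by move=> a b; apply: maxr_pMr.
Qed.

Lemma bigmax_mulr (I : finType) (P : pred I) (F : I -> R) (y : R) : 0 <= y ->
  (\big[Num.max/0]_(i | P i) F i) * y = \big[Num.max/0]_(i | P i) (F i * y).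
Proof.
move=> y0; rewrite mulrC mulr_bigmax //; apply: eq_bigr => i _; exact: mulrC.
Qed.

End E.

Lemma inv_exists (n x : nat) : (0 < n)%N -> coprime x n -> exists y : nat, (n%:Z %| y%:Z * x%:Z - 1)%Z.
Proof.
move=> n0 h.
have hz : coprimez x%:Z n%:Z by rewrite coprimezE.
have [u [v huv]] := Bezoutz x%:Z n%:Z.
have nz : n%:Z != 0 by rewrite eqz_nat -lt0n.
exists `|(u %% n%:Z)%Z|%N.
rewrite gez0_abs ?modz_ge0 //.
have g1 : gcdz x%:Z n%:Z = 1 by apply/eqP.
rewrite (_ : (u %% n%:Z)%Z * x%:Z - 1 = (u * x%:Z + v * n%:Z - 1) - ((u %/ n%:Z)%Z * x%:Z + v) * n%:Z); last first.
  by move: (divz_eq u n%:Z); set q := (u %/ n%:Z)%Z; set r := (u %% n%:Z)%Z => ->; ring.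
by rewrite huv g1 subrr sub0r rpredN dvdz_mull.
Qed.

Local Close Scope complex_scope.

Theorem lemma4 (R : realType) (t : int) (C1 C2 E1 E2 : nat) :
  (0 < C1)%N -> (0 < C2)%N -> (0 < E1)%N -> (0 < E2)%N ->
  coprime (C1 * C2) (E1 * E2) ->
  Rcal R t (C1 * E1) (C2 * E2) = Rcal R t C1 C2 * Rcal R t E1 E2.
Proof.
move=> hc1 hc2 he1 he2 hcop.
have hC : (0 < C1 * C2)%N by rewrite muln_gt0 hc1 hc2.
have hE : (0 < E1 * E2)%N by rewrite muln_gt0 he1 he2.
have hcop' := hcop; rewrite coprime_sym in hcop'.
move: (hcop) (hcop'); rewrite !coprimeMl => /andP [cC1 cC2] /andP [cE1 cE2].
have [ie1 hI1] := inv_exists hC cE1.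
have [ie2 hI2] := inv_exists hC cE2.
have [ic1 hJ1] := inv_exists hE cC1.
have [ic2 hJ2] := inv_exists hE cC2.
have /andP [ci1 _] := cop_nat_c hI1.
have /andP [ci2 _] := cop_nat_c hI2.
have /andP [cj1 _] := cop_nat_c hJ1.
have /andP [cj2 _] := cop_nat_c hJ2.
have ce1 : coprime C1 E1 by move: cC1; rewrite coprimeMr => /andP [].
have perC : forall (x y : nat) (d ix iy : nat), (0 < d)%N ->
    Xs R (x%:Z * ix%:Z) (iy%:Z * (y%:Z * t)) d C2 = Xs R (cmp ix 0 d x)%:Z ((cmp iy 0 d y)%:Z * t) d C2.
  move=> x y d ix iy d0; apply: Xs_per => //.
    rewrite /cmp addn0 modn_int PoszM (_ : _ - _ = ((ix * x) %/ d)%N%:Z * d%:Z); last by ring.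
    by rewrite dvdz_mull.
  rewrite /cmp addn0 modn_int PoszM (_ : _ - _ = (((iy * y) %/ d)%N%:Z * t) * d%:Z); last by ring.
  by rewrite dvdz_mull.
have perE : forall (x y : nat) (d ix iy : nat), (0 < d)%N ->
    Xs R (x%:Z * ix%:Z) (iy%:Z * (y%:Z * t)) d E2 = Xs R (cmp ix 0 d x)%:Z ((cmp iy 0 d y)%:Z * t) d E2.
  move=> x y d ix iy d0; apply: Xs_per => //.
    rewrite /cmp addn0 modn_int PoszM (_ : _ - _ = ((ix * x) %/ d)%N%:Z * d%:Z); last by ring.
    by rewrite dvdz_mull.
  rewrite /cmp addn0 modn_int PoszM (_ : _ - _ = (((iy * y) %/ d)%N%:Z * t) * d%:Z); last by ring.
  by rewrite dvdz_mull.
rewrite !Rcal_X ?muln_gt0 ?hc1 ?he1 ?hc2 ?he2 //.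
under eq_bigr => a _ do under eq_bigr => b _ do
  rewrite (X_mult R hc1 hc2 he1 he2 hcop hI1 hI2 hJ1 hJ2) perC // perE //.
under eq_bigr => a _ do
  rewrite (@max_crt R C1 E1 ie2 ic2 (fun i j =>
     Xs R (cmp ie1 0 C1 a)%:Z (i%:Z * t) C1 C2 * Xs R (cmp ic1 0 E1 a)%:Z (j%:Z * t) E1 E2) hc1 he1 ce1 ci2 cj2).
rewrite (@max_crt R C1 E1 ie1 ic1 (fun i j =>
     \big[Num.max/0]_(i' < C1 | coprime i' C1) \big[Num.max/0]_(j' < E1 | coprime j' E1)
     (Xs R i%:Z (i'%:Z * t) C1 C2 * Xs R j%:Z (j'%:Z * t) E1 E2)) hc1 he1 ce1 ci1 cj1).
under eq_bigr => i _ do rewrite (exchange_big_idem (maxxx 0)).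
under eq_bigr => i _ do under eq_bigr => i' _ do
  (under eq_bigr => j _ do rewrite -mulr_bigmax ?Xs_ge0 //; rewrite -mulr_bigmax ?Xs_ge0 //).
under eq_bigr => i _ do rewrite -bigmax_mulr ?bigmax_ge0 //.
by rewrite -bigmax_mulr ?bigmax_ge0.
Qed.
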